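(* Let $\kappa$ be an infinite regular cardinal and let $X$ and $Y$ be $\kappa$-join semilattices. Then $(X,Y)$ is a Morita pair between some m-regular $\kappa$-quantales if and only if there exist surjective $\kappa$-join semilattice morphisms $p: X\otimes_\kappa Y\otimes_\kappa X\to X$ and $q: Y\otimes_\kappa X\otimes_\kappa Y\to Y$ such that, for all $x_1,x_2,x_3\in X$ and $y_1,y_2,y_3\in Y$: 1. $p(p(x_1\otimes y_1\otimes x_2)\otimes y_2\otimes x_3)=p(x_1\otimes q(y_1\otimes x_2\otimes y_2)\otimes x_3)=p(x_1\otimes y_1\otimes p(x_2\otimes y_2\otimes x_3))$; 2. $q(q(y_1\otimes x_1\otimes y_2)\otimes x_2\otimes y_3)=q(y_1\otimes p(x_1\otimes y_2\otimes x_2)\otimes y_3)=q(y_1\otimes x_1\otimes q(y_2\otimes x_2\otimes y_3))$; 3. if $p(u\otimes v\otimes x_1)=p(u\otimes v\otimes x_2)$ for all $u\in X$, $v\in Y$, then $x_1=x_2$; 4. if $p(x_1\otimes v\otimes u)=p(x_2\otimes v\otimes u)$ for all $u\in X$, $v\in Y$, then $x_1=x_2$; 5. if $q(v\otimes u\otimes y_1)=q(v\otimes u\otimes y_2)$ for all $v\in Y$, $u\in X$, then $y_1=y_2$; 6. if $q(y_1\otimes u\otimes v)=q(y_2\otimes u\otimes v)$ for all $u\in X$, $v\in Y$, then $y_1=y_2$.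
   Context: $\kappa$ is an infinite regular cardinal. A $\kappa$-join semilattice is a poset in which every subset of cardinality $<\kappa$ has a join; morphisms preserve such joins. $\otimes_\kappa$ denotes the tensor product of $\kappa$-join semilattices (universal for maps preserving $\kappa$-joins in each variable separately). A $\kappa$-quantale is a $\kappa$-join semilattice with an associative multiplication distributing over $\kappa$-joins on both sides. A right $\kappa$-module over a $\kappa$-quantale $A$ is a $\kappa$-join semilattice $M$ with an action $M\times A\to M$ satisfying $m\cdot(ab)=(m\cdot a)\cdot b$ and preserving $\kappa$-joins in each variable; left modules dually. A right module is essential if every element is a $\kappa$-join of elements $m\cdot a$, separated if ($m\cdot a=n\cdot a$ for all $a\in A$) implies $m=n$, m-regular if both; dually on the left; an m-regular $A,B$-$\kappa$-bimodule is an m-regular left $A$-module and m-regular right $B$-module with commuting actions; a $\kappa$-quantale is m-regular if it is m-regular as a bimodule over itself. A Morita context between m-regular $\kappa$-quantales $A,B$ is $(A,B,X,Y,(-,-),[-,-])$ with $X$ an m-regular $A,B$-$\kappa$-bimodule, $Y$ an m-regular $B,A$-$\kappa$-bimodule, and $\kappa$-bimodule maps $(-,-):X\times Y\to A$, $[-,-]:Y\times X\to B$ satisfying $(x\cdot b,y)=(x,b\cdot y)$, $[y\cdot a,x]=[y,a\cdot x]$, $(x_1,y)\cdot x_2=x_1\cdot[y,x_2]$, $[y_1,x]\cdot y_2=y_1\cdot(x,y_2)$, and such that the induced maps $X\otimes_\kappa Y\to A$, $Y\otimes_\kappa X\to B$ are surjective; $(X,Y)$ is then a Morita pair. *)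

(* Defs.v *)
Definition card_le (A B : Type) : Prop :=
  exists f : A -> B, forall a a', f a = f a' -> a = a'.
Definition card_lt (A B : Type) : Prop := card_le A B /\ ~ card_le B A.

(* The cardinal kappa = |K| is infinite and regular: a union of fewer than
   kappa sets, each of cardinality < kappa, has cardinality < kappa. *)
Definition infinite_regular (K : Type) : Prop :=
  card_le nat K /\
  forall (I : Type) (J : I -> Type),
    card_lt I K -> (forall i, card_lt (J i) K) -> card_lt {i : I & J i} K.

Definition small (K : Type) {T : Type} (S : T -> Prop) : Prop :=
  card_lt {x : T | S x} K.

Definition is_lub {T : Type} (le : T -> T -> Prop) (S : T -> Prop) (j : T) : Prop :=
  (forall s, S s -> le s j) /\ (forall u, (forall s, S s -> le s u) -> le j u).

Definition img {T U : Type} (f : T -> U) (S : T -> Prop) : U -> Prop :=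
  fun u => exists t, S t /\ u = f t.

Record ksl (K : Type) := KSL {
  car :> Type;
  le : car -> car -> Prop;
  le_refl : forall x, le x x;
  le_trans : forall x y z, le x y -> le y z -> le x z;
  le_antisym : forall x y, le x y -> le y x -> x = y;
  join_ex : forall S : car -> Prop, small K S -> exists j, is_lub le S j
}.
Arguments le {K} _ _ _.

Section Morphisms.
Variable K : Type.

Definition kmorph {X Y : ksl K} (f : X -> Y) : Prop :=
  forall (S : X -> Prop) (j : X), small K S -> is_lub (le X) S j ->
    is_lub (le Y) (img f S) (f j).

Definition kbimorph {X Y Z : ksl K} (f : X -> Y -> Z) : Prop :=
  (forall y, kmorph (fun x => f x y)) /\ (forall x, kmorph (f x)).

Definition ktrimorph {X Y W Z : ksl K} (f : X -> Y -> W -> Z) : Prop :=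
  (forall y w, kmorph (fun x => f x y w)) /\
  (forall x w, kmorph (fun y => f x y w)) /\
  (forall x y, kmorph (f x y)).

Definition is_tensor2 (X Y T : ksl K) (t : X -> Y -> T) : Prop :=
  kbimorph t /\
  forall (Z : ksl K) (f : X -> Y -> Z), kbimorph f ->
    exists g : T -> Z, kmorph g /\ (forall x y, g (t x y) = f x y) /\
      forall g' : T -> Z, kmorph g' -> (forall x y, g' (t x y) = f x y) ->
        forall z, g' z = g z.

Definition is_tensor3 (X Y W T : ksl K) (t : X -> Y -> W -> T) : Prop :=
  ktrimorph t /\
  forall (Z : ksl K) (f : X -> Y -> W -> Z), ktrimorph f ->
    exists g : T -> Z, kmorph g /\ (forall x y w, g (t x y w) = f x y w) /\
      forall g' : T -> Z, kmorph g' -> (forall x y w, g' (t x y w) = f x y w) ->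
        forall z, g' z = g z.

Definition surj {A B : Type} (f : A -> B) : Prop := forall b, exists a, f a = b.

Definition is_kquantale (A : ksl K) (mul : A -> A -> A) : Prop :=
  kbimorph mul /\ forall a b c, mul a (mul b c) = mul (mul a b) c.

Definition is_rmodule (A : ksl K) (mul : A -> A -> A) (M : ksl K)
    (act : M -> A -> M) : Prop :=
  kbimorph act /\ forall m a b, act m (mul a b) = act (act m a) b.

Definition is_lmodule (A : ksl K) (mul : A -> A -> A) (M : ksl K)
    (act : A -> M -> M) : Prop :=
  kbimorph act /\ forall a b m, act (mul a b) m = act a (act b m).

Definition r_essential (A M : ksl K) (act : M -> A -> M) : Prop :=
  forall m : M, exists S : M -> Prop, small K S /\
    (forall z, S z -> exists n a, z = act n a) /\ is_lub (le M) S m.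
Definition r_separated (A M : ksl K) (act : M -> A -> M) : Prop :=
  forall m n : M, (forall a, act m a = act n a) -> m = n.
Definition l_essential (A M : ksl K) (act : A -> M -> M) : Prop :=
  forall m : M, exists S : M -> Prop, small K S /\
    (forall z, S z -> exists a n, z = act a n) /\ is_lub (le M) S m.
Definition l_separated (A M : ksl K) (act : A -> M -> M) : Prop :=
  forall m n : M, (forall a, act a m = act a n) -> m = n.

Definition r_mregular A M act := r_essential A M act /\ r_separated A M act.
Definition l_mregular A M act := l_essential A M act /\ l_separated A M act.

Definition mregular_bimodule (A : ksl K) (mulA : A -> A -> A)
    (B : ksl K) (mulB : B -> B -> B) (M : ksl K)
    (lact : A -> M -> M) (ract : M -> B -> M) : Prop :=
  is_lmodule A mulA M lact /\ is_rmodule B mulB M ract /\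
  (forall a m b, ract (lact a m) b = lact a (ract m b)) /\
  l_mregular A M lact /\ r_mregular B M ract.

Definition mregular_kquantale (A : ksl K) (mul : A -> A -> A) : Prop :=
  is_kquantale A mul /\ mregular_bimodule A mul A mul A mul mul.

(* (X, Y) is a Morita pair between some m-regular kappa-quantales; TXY, TYX
   are given tensor products X (x) Y and Y (x) X. *)
Definition morita_pair (X Y : ksl K)
    (TXY : ksl K) (tXY : X -> Y -> TXY) (TYX : ksl K) (tYX : Y -> X -> TYX) : Prop :=
  exists (A : ksl K) (mulA : A -> A -> A) (B : ksl K) (mulB : B -> B -> B)
    (lX : A -> X -> X) (rX : X -> B -> X) (lY : B -> Y -> Y) (rY : Y -> A -> Y)
    (pr : X -> Y -> A) (br : Y -> X -> B),
    mregular_kquantale A mulA /\ mregular_kquantale B mulB /\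
    mregular_bimodule A mulA B mulB X lX rX /\
    mregular_bimodule B mulB A mulA Y lY rY /\
    kbimorph pr /\ kbimorph br /\
    (forall a x y, pr (lX a x) y = mulA a (pr x y)) /\
    (forall x y a, pr x (rY y a) = mulA (pr x y) a) /\
    (forall b y x, br (lY b y) x = mulB b (br y x)) /\
    (forall y x b, br y (rX x b) = mulB (br y x) b) /\
    (forall x b y, pr (rX x b) y = pr x (lY b y)) /\
    (forall y a x, br (rY y a) x = br y (lX a x)) /\
    (forall x1 y x2, rX x1 (br y x2) = lX (pr x1 y) x2) /\
    (forall y1 x y2, rY y1 (pr x y2) = lY (br y1 x) y2) /\
    (exists g : TXY -> A, kmorph g /\ (forall x y, g (tXY x y) = pr x y) /\ surj g) /\
    (exists h : TYX -> B, kmorph h /\ (forall y x, h (tYX y x) = br y x) /\ surj h).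

End Morphisms.

(* Main.v *)
Require Import Defs.
From Stdlib Require Import Classical ClassicalEpsilon FunctionalExtensionality ProofIrrelevance.

Lemma sig_eq {T} {P : T -> Prop} (a b : {x | P x}) : proj1_sig a = proj1_sig b -> a = b.
Proof. destruct a, b; simpl; intro; subst; f_equal; apply proof_irrelevance. Qed.

Section Basic.
Variable K : Type.
Hypothesis hK : infinite_regular K.

Lemma card_le_trans A B C : card_le A B -> card_le B C -> card_le A C.
Proof.
  intros [f hf] [g hg]. exists (fun a => g (f a)). intros a a' e. auto.
Qed.

Lemma card_lt_le A B : card_le A B -> card_lt B K -> card_lt A K.
Proof.
  intros h [h1 h2]. split. eapply card_le_trans; eauto.
  intro c. apply h2. eapply card_le_trans; eauto.
Qed.

Lemma small_sub {T} (S S' : T -> Prop) : (forall z, S z -> S' z) -> small K S' -> small K S.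
Proof.
  intros H hs. unfold small in *. eapply card_lt_le; [|exact hs].
  exists (fun x : {z | S z} => exist _ (proj1_sig x) (H _ (proj2_sig x))).
  intros a a' e. apply sig_eq. exact (f_equal (@proj1_sig _ _) e).
Qed.

Definition pick_pre {T U} (f : T -> U) (S : T -> Prop) (x : {u | img f S u}) : {t | S t} :=
  let (t, Ht) := constructive_indefinite_description _ (proj2_sig x) in exist _ t (proj1 Ht).

Lemma pick_pre_spec {T U} (f : T -> U) S x : f (proj1_sig (pick_pre f S x)) = proj1_sig x.
Proof.
  unfold pick_pre. destruct (constructive_indefinite_description _ _) as [t [h1 h2]]. simpl. auto.
Qed.

Lemma small_img {T U} (f : T -> U) S : small K S -> small K (img f S).
Proof.
  intro hs. unfold small in *. eapply card_lt_le; [|exact hs].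
  exists (pick_pre f S). intros a a' e. apply sig_eq.
  rewrite <- (pick_pre_spec f S a), <- (pick_pre_spec f S a'), e. reflexivity.
Qed.

Lemma small_single {T} (a : T) : small K (fun z => z = a).
Proof.
  destruct hK as [[f hf] _]. split.
  - exists (fun _ => f 0). intros [x ex] [y ey] _. apply sig_eq; simpl; congruence.
  - intros [g hg]. assert (H : f 0 = f 1).
    { apply hg. apply sig_eq. destruct (g (f 0)) as [x ex], (g (f 1)) as [y ey]. simpl. congruence. }
    apply hf in H. discriminate.
Qed.

Lemma small_empty {T} : small K (fun _ : T => False).
Proof.
  destruct hK as [[f hf] _]. split.
  - exists (fun x : {z : T | False} => match proj2_sig x with end). intros [x []].
  - intros [g hg]. destruct (g (f 0)) as [x []].
Qed.

Lemma union_small {T} (S : T -> Prop) (W : T -> T -> Prop) :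
  small K S -> (forall s, S s -> small K (W s)) -> small K (fun w => exists s, S s /\ W s w).
Proof.
  intros hS hW. destruct hK as [_ hreg].
  pose (I := {s | S s}). pose (J := fun i : I => {w | W (proj1_sig i) w}).
  assert (H := hreg I J hS (fun i => hW (proj1_sig i) (proj2_sig i))).
  unfold small. eapply card_lt_le; [|exact H].
  exists (fun x : {w | exists s, S s /\ W s w} =>
    let (s, Hs) := constructive_indefinite_description _ (proj2_sig x) in
    existT J (exist _ s (proj1 Hs)) (exist _ (proj1_sig x) (proj2 Hs))).
  intros a a' e.
  destruct (constructive_indefinite_description _ (proj2_sig a)) as [s Hs].
  destruct (constructive_indefinite_description _ (proj2_sig a')) as [s' Hs'].
  apply sig_eq. apply (f_equal (fun x : {i : I & J i} => proj1_sig (P := fun w => W (proj1_sig (projT1 x)) w) (projT2 x))) in e. exact e.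
Qed.

Definition bot (X : ksl K) : X :=
  proj1_sig (constructive_indefinite_description _ (join_ex K X _ small_empty)).

Lemma lub_unique (X : ksl K) S (a b : X) : is_lub (le X) S a -> is_lub (le X) S b -> a = b.
Proof.
  intros [h1 h2] [h3 h4]. apply le_antisym; auto.
Qed.

Lemma lub_ext (X : ksl K) (S S' : X -> Prop) j :
  (forall z, S z <-> S' z) -> is_lub (le X) S j -> is_lub (le X) S' j.
Proof.
  intros H [h1 h2]. split.
  - intros s hs. apply h1, H, hs.
  - intros u hu. apply h2. intros s hs. apply hu, H, hs.
Qed.

Lemma img_ext {T U} (f g : T -> U) S :
  (forall t, S t -> f t = g t) -> forall z, img f S z <-> img g S z.
Proof.
  intros H z; split; intros [t [h1 h2]]; exists t; split; auto; rewrite h2; [|symmetry]; auto.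
Qed.

Lemma img_comp {T U V} (f : T -> U) (g : U -> V) S z :
  img g (img f S) z <-> img (fun t => g (f t)) S z.
Proof.
  split.
  - intros [u [[t [h1 h2]] h3]]. exists t. subst. auto.
  - intros [t [h1 h2]]. exists (f t). split; auto. exists t; auto.
Qed.

Lemma kmorph_comp {X Y Z : ksl K} (f : X -> Y) (g : Y -> Z) :
  kmorph K f -> kmorph K g -> kmorph K (fun x => g (f x)).
Proof.
  intros hf hg S j hs hl. eapply lub_ext. apply img_comp.
  apply hg. apply small_img; auto. apply hf; auto.
Qed.

Lemma kmorph_id {X : ksl K} : kmorph K (fun x : X => x).
Proof.
  intros S j hs hl. eapply lub_ext; [|exact hl].
  intro z; split; [intro h; exists z; auto | intros [t [h1 h2]]; subst; auto].
Qed.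

Lemma eq_closed {W Z : ksl K} (F G : W -> Z) S j :
  kmorph K F -> kmorph K G -> small K S -> is_lub (le W) S j ->
  (forall s, S s -> F s = G s) -> F j = G j.
Proof.
  intros hF hG hs hl H. eapply lub_unique. apply hF; eauto.
  eapply lub_ext. intro z; symmetry; apply img_ext; eauto. apply hG; eauto.
Qed.

Lemma ex_closed {W V Z : ksl K} (F : W -> Z) (G : V -> Z) S j :
  kmorph K F -> kmorph K G -> small K S -> is_lub (le V) S j ->
  (forall s, S s -> exists w, F w = G s) -> exists w, F w = G j.
Proof.
  intros hF hG hs hl H.
  assert (H' : forall s, exists w, S s -> F w = G s).
  { intro s. destruct (classic (S s)) as [h|h].
    - destruct (H s h) as [w hw]. exists w; auto.
    - exists (bot W). intro; contradiction. }
  pose (c := fun s => proj1_sig (constructive_indefinite_description _ (H' s))).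
  assert (hc : forall s, S s -> F (c s) = G s).
  { intros s h. unfold c. destruct (constructive_indefinite_description _ _). simpl. auto. }
  destruct (join_ex K W (img c S) (small_img c S hs)) as [r hr].
  exists r. eapply lub_unique. apply hF; [apply (small_img c S hs)| exact hr].
  eapply lub_ext; [|apply hG; eauto].
  intro z. rewrite img_comp. split; intros [t [h1 h2]]; exists t; split; auto; rewrite hc in *; auto.
Qed.

Definition ess {X : ksl K} (G : X -> Prop) (x : X) : Prop :=
  exists S : X -> Prop, small K S /\ (forall z, S z -> G z) /\ is_lub (le X) S x.

Lemma ess_single {X : ksl K} (G : X -> Prop) x : G x -> ess G x.
Proof.
  intro h. exists (fun z => z = x). split; [apply small_single|split].
  - intros z ->; auto.
  - split. intros s ->; apply le_refl. intros u hu; apply hu; auto.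
Qed.

Lemma ess_closed {X : ksl K} (G : X -> Prop) S j :
  small K S -> is_lub (le X) S j -> (forall s, S s -> ess G s) -> ess G j.
Proof.
  intros hs hl H.
  assert (H' : forall s, exists W : X -> Prop, S s -> small K W /\ (forall z, W z -> G z) /\ is_lub (le X) W s).
  { intro s. destruct (classic (S s)) as [h|h].
    - destruct (H s h) as [W hW]. exists W; auto.
    - exists (fun _ => False). intro; contradiction. }
  pose (W := fun s => proj1_sig (constructive_indefinite_description _ (H' s))).
  assert (hW : forall s, S s -> small K (W s) /\ (forall z, W s z -> G z) /\ is_lub (le X) (W s) s).
  { intros s h. unfold W. destruct (constructive_indefinite_description _ _). simpl. auto. }
  exists (fun w => exists s, S s /\ W s w). split; [|split].
  - apply union_small; auto. intros s h; apply hW; auto.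
  - intros z [s [h1 h2]]. apply (hW s h1); auto.
  - split.
    + intros z [s [h1 h2]]. eapply le_trans. apply (hW s h1); auto. apply hl; auto.
    + intros u hu. apply hl. intros s h. apply (hW s h). intros z hz. apply hu. exists s; auto.
Qed.

End Basic.
Section Struct.
Variable K : Type.
Hypothesis hK : infinite_regular K.

Section Sub.
Variable Z : ksl K.
Variable P : Z -> Prop.
Hypothesis HP : forall S j, small K S -> is_lub (le Z) S j -> (forall s, S s -> P s) -> P j.

Definition suble (a b : {z | P z}) : Prop := le Z (proj1_sig a) (proj1_sig b).

Lemma sub_join (S : {z | P z} -> Prop) : small K S -> exists j, is_lub suble S j.
Proof.
  intro hs. destruct (join_ex K Z (img (@proj1_sig _ _) S) (small_img K _ _ hs)) as [j hj].
  assert (Pj : P j).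
  { apply (HP _ _ (small_img K _ _ hs) hj). intros s [w [h1 h2]]. subst. apply proj2_sig. }
  exists (exist _ j Pj). split.
  - intros s h. apply hj. exists s; auto.
  - intros u hu. apply hj. intros s [w [h1 h2]]. subst. apply hu; auto.
Qed.

Definition subksl : ksl K :=
  KSL K {z | P z} suble
    (fun x => le_refl K Z (proj1_sig x))
    (fun x y z => le_trans K Z (proj1_sig x) (proj1_sig y) (proj1_sig z))
    (fun x y h1 h2 => sig_eq x y (le_antisym K Z _ _ h1 h2))
    sub_join.

Lemma sub_lub_r (S : subksl -> Prop) (w : subksl) :
  is_lub (le Z) (img (@proj1_sig _ _) S) (proj1_sig w) -> is_lub (le subksl) S w.
Proof.
  intros [h1 h2]. split.
  + intros s hs. apply h1. exists s; auto.
  + intros u hu. apply h2. intros s [v [hv ->]]. apply hu; auto.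
Qed.

Lemma sub_lub (S : subksl -> Prop) (w : subksl) : small K S ->
  is_lub (le subksl) S w -> is_lub (le Z) (img (@proj1_sig _ _) S) (proj1_sig w).
Proof.
  intros hs hw. destruct (join_ex K Z (img (@proj1_sig _ _) S) (small_img K _ _ hs)) as [j hj].
  assert (Pj : P j).
  { apply (HP _ _ (small_img K _ _ hs) hj). intros s [v [h1 h2]]. subst. apply proj2_sig. }
  assert (e : w = exist _ j Pj).
  { eapply lub_unique. exact hw. apply sub_lub_r. exact hj. }
  subst w. exact hj.
Qed.

Lemma kmorph_val : kmorph K (X:=subksl) (@proj1_sig _ _).
Proof. intros S j hs hl. apply sub_lub; auto. Qed.
End Sub.

Section FSdef.
Variable I : Type.
Variable Z : ksl K.

Definition fsle (f g : I -> Z) : Prop := forall i, le Z (f i) (g i).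

Lemma fs_join (S : (I -> Z) -> Prop) : small K S -> exists j, is_lub fsle S j.
Proof.
  intro hs.
  exists (fun i => proj1_sig (constructive_indefinite_description _
            (join_ex K Z (img (fun g => g i) S) (small_img K _ _ hs)))).
  split.
  - intros s h i. destruct (constructive_indefinite_description _ _) as [j hj]. simpl.
    apply hj. exists s; auto.
  - intros u hu i. destruct (constructive_indefinite_description _ _) as [j hj]. simpl.
    apply hj. intros z [s [h1 ->]]. apply hu; auto.
Qed.

Definition FS : ksl K :=
  KSL K (I -> Z) fsle
    (fun f i => le_refl K Z (f i))
    (fun f g h h1 h2 i => le_trans K Z _ _ _ (h1 i) (h2 i))
    (fun f g h1 h2 => functional_extensionality f g (fun i => le_antisym K Z _ _ (h1 i) (h2 i)))
    fs_join.

Lemma FS_lub_r (S : FS -> Prop) (f : FS) :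
  (forall i, is_lub (le Z) (img (fun g : FS => g i) S) (f i)) -> is_lub (le FS) S f.
Proof.
  intros H. split.
  - intros s hs i. apply H. exists s; auto.
  - intros u hu i. apply H. intros z [s [h1 ->]]. apply hu; auto.
Qed.

Lemma FS_lub (S : FS -> Prop) (f : FS) : small K S ->
  is_lub (le FS) S f -> forall i, is_lub (le Z) (img (fun g : FS => g i) S) (f i).
Proof.
  intros hs hf.
  pose (j := fun i => proj1_sig (constructive_indefinite_description _
            (join_ex K Z (img (fun g : FS => g i) S) (small_img K _ _ hs)))).
  assert (hj : forall i, is_lub (le Z) (img (fun g : FS => g i) S) (j i)).
  { intro i. unfold j. destruct (constructive_indefinite_description _ _). auto. }
  assert (e : f = j). { eapply lub_unique. exact hf. apply FS_lub_r. exact hj. }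
  subst f. exact hj.
Qed.

Lemma kmorph_FS {X : ksl K} (h : X -> FS) :
  (forall i, kmorph K (fun x => h x i)) -> kmorph K h.
Proof.
  intros H S j hs hl. apply FS_lub_r. intro i.
  eapply lub_ext. intro z; symmetry; apply img_comp. apply H; auto.
Qed.

Lemma kmorph_ev (i : I) : kmorph K (X:=FS) (fun g => g i).
Proof.
  intros S j hs hl. apply FS_lub; auto.
Qed.

Lemma kmorph_FS_ev {X : ksl K} (h : X -> FS) i : kmorph K h -> kmorph K (fun x => h x i).
Proof. intro H. apply (kmorph_comp K h (fun g : FS => g i) H (kmorph_ev i)). Qed.
End FSdef.

Lemma pw_lub_kmorph {X Z : ksl K} (S : (X -> Z) -> Prop) (F : X -> Z) :
  (forall x, is_lub (le Z) (img (fun g => g x) S) (F x)) ->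
  (forall g, S g -> kmorph K g) -> kmorph K F.
Proof.
  intros HF Hg S0 j hs hl. split.
  - intros z [s [h1 ->]]. apply HF. intros w [g [hg ->]].
    eapply le_trans with (y := g j).
    + apply (Hg g hg S0 j hs hl). exists s; auto.
    + apply HF. exists g; auto.
  - intros u hu. apply HF. intros w [g [hg ->]].
    apply (Hg g hg S0 j hs hl). intros z [s [h1 ->]].
    eapply le_trans. 2: apply hu; exists s; split; eauto.
    apply HF. exists g; auto.
Qed.

Lemma kmorph_sep {X N Z : ksl K} (Ii : Type) (G : Ii -> N -> Z) (h : X -> N) (H : Ii -> X -> Z) :
  (forall i, kmorph K (G i)) -> (forall a b, (forall i, G i a = G i b) -> a = b) ->
  (forall i, kmorph K (H i)) -> (forall i x, G i (h x) = H i x) -> kmorph K h.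
Proof.
  intros hG sep hH e S j hs hl.
  destruct (join_ex K N (img h S) (small_img K h S hs)) as [w hw].
  assert (h j = w).
  { apply sep. intro i. rewrite e. eapply lub_unique. apply hH; eauto.
    eapply lub_ext. 2: apply (hG i); [apply (small_img K h S hs)|exact hw].
    intro z. rewrite img_comp. apply img_ext. intros; symmetry; auto. }
  rewrite H0; auto.
Qed.

Lemma kbimorph_comp {X Y T Z : ksl K} (t : X -> Y -> T) (g : T -> Z) :
  kbimorph K t -> kmorph K g -> kbimorph K (fun x y => g (t x y)).
Proof.
  intros [h1 h2] hg. split; intros; apply kmorph_comp; auto.
Qed.

Lemma ktrimorph_comp {X Y W T Z : ksl K} (t : X -> Y -> W -> T) (g : T -> Z) :
  ktrimorph K t -> kmorph K g -> ktrimorph K (fun x y w => g (t x y w)).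
Proof.
  intros [h1 [h2 h3]] hg. split; [|split]; intros; apply kmorph_comp; auto.
Qed.

Lemma tensor2_unique {X Y T : ksl K} (t : X -> Y -> T) : is_tensor2 K X Y T t ->
  forall (Z : ksl K) (g1 g2 : T -> Z), kmorph K g1 -> kmorph K g2 ->
  (forall x y, g1 (t x y) = g2 (t x y)) -> forall z, g1 z = g2 z.
Proof.
  intros [ht hu] Z g1 g2 h1 h2 e z.
  destruct (hu Z (fun x y => g1 (t x y)) (kbimorph_comp t g1 ht h1)) as [g [hg [hgt hgu]]].
  rewrite (hgu g1 h1), (hgu g2 h2); auto.
Qed.

Lemma tensor3_unique {X Y W T : ksl K} (t : X -> Y -> W -> T) : is_tensor3 K X Y W T t ->
  forall (Z : ksl K) (g1 g2 : T -> Z), kmorph K g1 -> kmorph K g2 ->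
  (forall x y w, g1 (t x y w) = g2 (t x y w)) -> forall z, g1 z = g2 z.
Proof.
  intros [ht hu] Z g1 g2 h1 h2 e z.
  destruct (hu Z (fun x y w => g1 (t x y w)) (ktrimorph_comp t g1 ht h1)) as [g [hg [hgt hgu]]].
  rewrite (hgu g1 h1), (hgu g2 h2); auto.
Qed.

Definition jclosed {T : ksl K} (P : T -> Prop) :=
  forall S j, small K S -> is_lub (le T) S j -> (forall s, S s -> P s) -> P j.

Lemma tensor2_ind {X Y T : ksl K} (t : X -> Y -> T) : is_tensor2 K X Y T t ->
  forall P : T -> Prop, jclosed P -> (forall x y, P (t x y)) -> forall z, P z.
Proof.
  intros hT P HP Hg.
  pose (Sb := subksl T P HP).
  pose (f := fun x y => exist P (t x y) (Hg x y) : Sb).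
  assert (hf : kbimorph K f).
  { destruct hT as [[ht1 ht2] _]. split.
    - intros y S j hs hl. apply sub_lub_r. simpl.
      eapply lub_ext. intro z; symmetry. apply (img_comp (fun x => f x y) (@proj1_sig _ _)).
      apply ht1; auto.
    - intros x S j hs hl. apply sub_lub_r. simpl.
      eapply lub_ext. intro z; symmetry. apply (img_comp (f x) (@proj1_sig _ _)).
      apply ht2; auto. }
  destruct (proj2 hT Sb f hf) as [g [hg [hgt _]]].
  intro z.
  assert (e : proj1_sig (g z) = z).
  { apply (tensor2_unique t hT T (fun z => proj1_sig (g z)) (fun z => z)).
    - apply kmorph_comp; auto. apply kmorph_val.
    - apply kmorph_id.
    - intros x y. rewrite hgt. reflexivity. }
  rewrite <- e. apply proj2_sig.
Qed.

Lemma tensor3_ind {X Y W T : ksl K} (t : X -> Y -> W -> T) : is_tensor3 K X Y W T t ->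
  forall P : T -> Prop, jclosed P -> (forall x y w, P (t x y w)) -> forall z, P z.
Proof.
  intros hT P HP Hg.
  pose (Sb := subksl T P HP).
  pose (f := fun x y w => exist P (t x y w) (Hg x y w) : Sb).
  assert (hf : ktrimorph K f).
  { destruct hT as [[ht1 [ht2 ht3]] _]. split; [|split].
    - intros y w S j hs hl. apply sub_lub_r. simpl.
      eapply lub_ext. intro z; symmetry. apply (img_comp (fun x => f x y w) (@proj1_sig _ _)).
      apply ht1; auto.
    - intros x w S j hs hl. apply sub_lub_r. simpl.
      eapply lub_ext. intro z; symmetry. apply (img_comp (fun y => f x y w) (@proj1_sig _ _)).
      apply ht2; auto.
    - intros x y S j hs hl. apply sub_lub_r. simpl.
      eapply lub_ext. intro z; symmetry. apply (img_comp (f x y) (@proj1_sig _ _)).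
      apply ht3; auto. }
  destruct (proj2 hT Sb f hf) as [g [hg [hgt _]]].
  intro z.
  assert (e : proj1_sig (g z) = z).
  { apply (tensor3_unique t hT T (fun z => proj1_sig (g z)) (fun z => z)).
    - apply kmorph_comp; auto. apply kmorph_val.
    - apply kmorph_id.
    - intros x y w. rewrite hgt. reflexivity. }
  rewrite <- e. apply proj2_sig.
Qed.

Lemma eq_jclosed {T Z : ksl K} (Ii : Type) (F G : Ii -> T -> Z) :
  (forall i, kmorph K (F i)) -> (forall i, kmorph K (G i)) -> jclosed (fun t => forall i, F i t = G i t).
Proof.
  intros hF hG S j hs hl H i. apply (eq_closed K (F i) (G i) S j); auto.
Qed.

Lemma ex_jclosed {W T Z : ksl K} (F : W -> Z) (G : T -> Z) :
  kmorph K F -> kmorph K G -> jclosed (fun t => exists w, F w = G t).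
Proof.
  intros hF hG S j hs hl H. apply (ex_closed K hK F G S j); auto.
Qed.

Lemma ess_jclosed {T Z : ksl K} (Gp : Z -> Prop) (F : T -> Z) :
  kmorph K F -> jclosed (fun t => ess K Gp (F t)).
Proof.
  intros hF S j hs hl H. apply (ess_closed K hK Gp (img F S)).
  apply small_img; auto. apply hF; auto.
  intros s [t [h1 ->]]. auto.
Qed.

Definition ind2 {X Y T : ksl K} (t : X -> Y -> T) (hT : is_tensor2 K X Y T t)
  {Z : ksl K} (f : X -> Y -> Z) (hf : kbimorph K f) : T -> Z :=
  proj1_sig (constructive_indefinite_description _ (proj2 hT Z f hf)).

Lemma ind2_spec {X Y T : ksl K} (t : X -> Y -> T) (hT : is_tensor2 K X Y T t)
  {Z : ksl K} (f : X -> Y -> Z) (hf : kbimorph K f) :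
  kmorph K (ind2 t hT f hf) /\ forall x y, ind2 t hT f hf (t x y) = f x y.
Proof.
  unfold ind2. generalize (proj2_sig (constructive_indefinite_description _ (proj2 hT Z f hf))).
  intros [h1 [h2 _]]. auto.
Qed.

Definition ind3 {X Y W T : ksl K} (t : X -> Y -> W -> T) (hT : is_tensor3 K X Y W T t)
  {Z : ksl K} (f : X -> Y -> W -> Z) (hf : ktrimorph K f) : T -> Z :=
  proj1_sig (constructive_indefinite_description _ (proj2 hT Z f hf)).

Lemma ind3_spec {X Y W T : ksl K} (t : X -> Y -> W -> T) (hT : is_tensor3 K X Y W T t)
  {Z : ksl K} (f : X -> Y -> W -> Z) (hf : ktrimorph K f) :
  kmorph K (ind3 t hT f hf) /\ forall x y w, ind3 t hT f hf (t x y w) = f x y w.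
Proof.
  unfold ind3. generalize (proj2_sig (constructive_indefinite_description _ (proj2 hT Z f hf))).
  intros [h1 [h2 _]]. auto.
Qed.

End Struct.
Section Fwd.
Variable K : Type.
Hypothesis hK : infinite_regular K.

Lemma eq_jclosed1 {T Z : ksl K} (F G : T -> Z) :
  kmorph K F -> kmorph K G -> jclosed K (fun t => F t = G t).
Proof.
  intros hF hG S j hs hl H. apply (eq_closed K F G S j); auto.
Qed.

Lemma fwd_side (A B X Y TXY TYX TXYX : ksl K)
  (lX : A -> X -> X) (rX : X -> B -> X) (pr : X -> Y -> A) (br : Y -> X -> B)
  (tXY : X -> Y -> TXY) (hXY : is_tensor2 K X Y TXY tXY)
  (tYX : Y -> X -> TYX) (hYX : is_tensor2 K Y X TYX tYX)
  (tXYX : X -> Y -> X -> TXYX) (hXYX : is_tensor3 K X Y X TXYX tXYX)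
  (hlX : kbimorph K lX) (hrX : kbimorph K rX) (hpr : kbimorph K pr) (hbr : kbimorph K br)
  (hid : forall x1 y x2, rX x1 (br y x2) = lX (pr x1 y) x2)
  (ess : l_essential K A X lX) (lsep : l_separated K A X lX) (rsep : r_separated K B X rX)
  (g : TXY -> A) (hg : kmorph K g) (hgc : forall x y, g (tXY x y) = pr x y) (hgs : surj g)
  (h : TYX -> B) (hh : kmorph K h) (hhc : forall y x, h (tYX y x) = br y x) (hhs : surj h) :
  exists p : TXYX -> X, kmorph K p /\ surj p /\
    (forall x y x', p (tXYX x y x') = rX x (br y x')) /\
    (forall x y x', p (tXYX x y x') = lX (pr x y) x') /\
    (forall x1 x2 : X, (forall (u : X) (v : Y), p (tXYX u v x1) = p (tXYX u v x2)) -> x1 = x2) /\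
    (forall x1 x2 : X, (forall (u : X) (v : Y), p (tXYX x1 v u) = p (tXYX x2 v u)) -> x1 = x2).
Proof.
  assert (hf : ktrimorph K (fun x y x' => rX x (br y x'))).
  { split; [|split].
    - intros y x'. apply (proj1 hrX).
    - intros x x'. apply (kmorph_comp K (fun y => br y x') (rX x) (proj1 hbr x') (proj2 hrX x)).
    - intros x y. apply (kmorph_comp K (br y) (rX x) (proj2 hbr y) (proj2 hrX x)). }
  destruct (ind3_spec K tXYX hXYX _ hf) as [hp pc].
  set (p := ind3 K tXYX hXYX _ hf) in *.
  assert (pc2 : forall x y x', p (tXYX x y x') = lX (pr x y) x').
  { intros. rewrite pc. apply hid. }
  exists p. split; [exact hp|split; [|split; [exact pc|split; [exact pc2|split]]]].
  - intro x. destruct (ess x) as [S [hs [hS hl]]].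
    destruct (ex_closed K hK p (fun z => z) S x hp (kmorph_id K) hs hl) as [w hw].
    + intros s hs0. destruct (hS s hs0) as [a [n ->]]. clear hs0.
      destruct (hgs a) as [t <-]. revert t.
      apply (tensor2_ind K tXY hXY (fun t => exists w, p w = lX (g t) n)).
      * apply ex_jclosed; auto. apply (kmorph_comp K g (fun a => lX a n) hg (proj1 hlX n)).
      * intros u v. exists (tXYX u v n). rewrite pc2, hgc. reflexivity.
    + exists w; auto.
  - intros x1 x2 H. apply lsep. intro a. destruct (hgs a) as [t <-]. revert t.
    apply (tensor2_ind K tXY hXY (fun t => lX (g t) x1 = lX (g t) x2)).
    + apply eq_jclosed1; apply (kmorph_comp K g (fun a => lX a _) hg (proj1 hlX _)).
    + intros u v. rewrite hgc, <- !pc2. apply H.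
  - intros x1 x2 H. apply rsep. intro b. destruct (hhs b) as [s <-]. revert s.
    apply (tensor2_ind K tYX hYX (fun s => rX x1 (h s) = rX x2 (h s))).
    + apply eq_jclosed1; apply (kmorph_comp K h (rX _) hh (proj2 hrX _)).
    + intros v u. rewrite hhc, <- !pc. apply H.
Qed.
End Fwd.
Lemma kmorph_ext (K : Type) {X Y : ksl K} (f g : X -> Y) :
  kmorph K f -> (forall x, f x = g x) -> kmorph K g.
Proof.
  intros hf e. replace g with f; auto. apply functional_extensionality; auto.
Qed.

Section Side.
Variable K : Type.
Hypothesis hK : infinite_regular K.
Variables M N TMN TMNM TNMN : ksl K.
Variable tMN : M -> N -> TMN.
Hypothesis hMN : is_tensor2 K M N TMN tMN.
Variable tMNM : M -> N -> M -> TMNM.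
Hypothesis hMNM : is_tensor3 K M N M TMNM tMNM.
Variable tNMN : N -> M -> N -> TNMN.
Hypothesis hNMN : is_tensor3 K N M N TNMN tNMN.
Variable p : TMNM -> M.
Variable q : TNMN -> N.
Hypothesis hp : kmorph K p.
Hypothesis hps : surj p.
Hypothesis hq : kmorph K q.
Hypothesis hqs : surj q.
Hypothesis pr1 : forall (x1 x2 x3 : M) (y1 y2 : N),
       p (tMNM (p (tMNM x1 y1 x2)) y2 x3) = p (tMNM x1 (q (tNMN y1 x2 y2)) x3) /\
       p (tMNM x1 (q (tNMN y1 x2 y2)) x3) = p (tMNM x1 y1 (p (tMNM x2 y2 x3))).
Hypothesis pr2 : forall (x1 x2 : M) (y1 y2 y3 : N),
       q (tNMN (q (tNMN y1 x1 y2)) x2 y3) = q (tNMN y1 (p (tMNM x1 y2 x2)) y3) /\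
       q (tNMN y1 (p (tMNM x1 y2 x2)) y3) = q (tNMN y1 x1 (q (tNMN y2 x2 y3))).
Hypothesis pr3 : forall x1 x2 : M, (forall (u : M) (v : N), p (tMNM u v x1) = p (tMNM u v x2)) -> x1 = x2.
Hypothesis pr6 : forall y1 y2 : N, (forall (u : M) (v : N), q (tNMN y1 u v) = q (tNMN y2 u v)) -> y1 = y2.

Let t1 := proj1 (proj1 hMNM).
Let t2 := proj1 (proj2 (proj1 hMNM)).
Let t3 := proj2 (proj2 (proj1 hMNM)).
Let s1 := proj1 (proj1 hNMN).
Let s2 := proj1 (proj2 (proj1 hNMN)).
Let s3 := proj2 (proj2 (proj1 hNMN)).

Definition fPhi (u : M) (v : N) : FS K M M := fun m => p (tMNM u v m).
Lemma hfPhi : kbimorph K fPhi.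
Proof.
  split.
  - intro v. apply kmorph_FS. intro m. apply (kmorph_comp K (fun u => tMNM u v m) p (t1 v m) hp).
  - intro u. apply kmorph_FS. intro m. apply (kmorph_comp K (fun v => tMNM u v m) p (t2 u m) hp).
Qed.
Definition Phi : TMN -> FS K M M := ind2 K tMN hMN fPhi hfPhi.
Lemma Phi_k : kmorph K Phi. Proof. apply ind2_spec. Qed.
Lemma Phi_c u v m : Phi (tMN u v) m = p (tMNM u v m).
Proof. unfold Phi. rewrite (proj2 (ind2_spec K tMN hMN fPhi hfPhi)). reflexivity. Qed.

Definition fPsi (u : M) (v : N) : FS K N N := fun n => q (tNMN n u v).
Lemma hfPsi : kbimorph K fPsi.
Proof.
  split.
  - intro v. apply kmorph_FS. intro n. apply (kmorph_comp K (fun u => tNMN n u v) q (s2 n v) hq).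
  - intro u. apply kmorph_FS. intro n. apply (kmorph_comp K (fun v => tNMN n u v) q (s3 n u) hq).
Qed.
Definition Psi : TMN -> FS K N N := ind2 K tMN hMN fPsi hfPsi.
Lemma Psi_k : kmorph K Psi. Proof. apply ind2_spec. Qed.
Lemma Psi_c u v n : Psi (tMN u v) n = q (tNMN n u v).
Proof. unfold Psi. rewrite (proj2 (ind2_spec K tMN hMN fPsi hfPsi)). reflexivity. Qed.

Lemma Phi_each t : kmorph K (X:=M) (Y:=M) (Phi t).
Proof.
  revert t. apply (tensor2_ind K tMN hMN).
  - intros S j hs hl H.
    apply (pw_lub_kmorph K (img Phi S)).
    + apply FS_lub. apply small_img; auto. apply Phi_k; auto.
    + intros g [s [h1 ->]]. auto.
  - intros u v. apply (kmorph_ext K (fun m => p (tMNM u v m))).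
    apply (kmorph_comp K (tMNM u v) p (t3 u v) hp).
    intro; symmetry; apply Phi_c.
Qed.

Definition Qpred (f : FS K M M) : Prop := exists t, Phi t = f.
Lemma HQ : jclosed K Qpred.
Proof. apply (ex_jclosed K hK Phi (fun f => f) Phi_k (kmorph_id K)). Qed.

Definition Q : ksl K := subksl K (FS K M M) Qpred HQ.
Definition ev (a : Q) (m : M) : M := proj1_sig a m.
Definition inQ (t : TMN) : Q := exist Qpred (Phi t) (ex_intro _ t eq_refl).

Lemma Q_ext (a b : Q) : (forall m, ev a m = ev b m) -> a = b.
Proof. intro H. apply sig_eq. apply functional_extensionality. exact H. Qed.

Lemma kmorph_ev_Q m : kmorph K (fun a : Q => ev a m).
Proof.
  apply (kmorph_comp K (X:=Q) (@proj1_sig _ _) (fun g : FS K M M => g m)).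
  apply kmorph_val. apply kmorph_ev.
Qed.

Lemma kmorph_intoQ {X : ksl K} (h : X -> Q) : (forall m, kmorph K (fun x => ev (h x) m)) -> kmorph K h.
Proof.
  intros H S j hs hl. apply sub_lub_r. apply FS_lub_r. intro m.
  eapply lub_ext; [|apply (H m S j hs hl)].
  intro z. rewrite img_comp, img_comp. tauto.
Qed.

Definition pre (a : Q) : TMN := proj1_sig (constructive_indefinite_description _ (proj2_sig a)).
Lemma pre_spec (a : Q) : Phi (pre a) = proj1_sig a.
Proof. unfold pre. apply (proj2_sig (constructive_indefinite_description _ (proj2_sig a))). Qed.
Lemma ev_pre a m : ev a m = Phi (pre a) m.
Proof. unfold ev. rewrite pre_spec. reflexivity. Qed.

Lemma ev_kmorph (a : Q) : kmorph K (ev a).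
Proof. apply (kmorph_ext K (Phi (pre a))). apply Phi_each. intro; symmetry; apply ev_pre. Qed.

Lemma inQ_k : kmorph K inQ.
Proof. apply kmorph_intoQ. intro m. apply (kmorph_FS_ev K _ _ Phi m Phi_k). Qed.


Lemma comp1 u v s : exists r, Phi r = ((fun m => p (tMNM u v (Phi s m))) : FS K M M).
Proof.
  revert s. apply (tensor2_ind K tMN hMN).
  - apply (ex_jclosed K hK Phi (fun s => ((fun m => p (tMNM u v (Phi s m))) : FS K M M)) Phi_k).
    apply kmorph_FS. intro m.
    apply (kmorph_comp K (fun s => Phi s m) (fun x => p (tMNM u v x))).
    apply (kmorph_FS_ev K _ _ Phi m Phi_k).
    apply (kmorph_comp K (tMNM u v) p (t3 u v) hp).
  - intros u' v'. exists (tMN (p (tMNM u v u')) v').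
    apply functional_extensionality. intro m. rewrite !Phi_c.
    exact (eq_trans (proj1 (pr1 u u' m v v')) (proj2 (pr1 u u' m v v'))).
Qed.

Lemma comp2 t s : exists r, Phi r = ((fun m => Phi t (Phi s m)) : FS K M M).
Proof.
  revert t. apply (tensor2_ind K tMN hMN).
  - apply (ex_jclosed K hK Phi (fun t => ((fun m => Phi t (Phi s m)) : FS K M M)) Phi_k).
    apply kmorph_FS. intro m. apply (kmorph_FS_ev K _ _ Phi _ Phi_k).
  - intros u v. destruct (comp1 u v s) as [r hr]. exists r. rewrite hr.
    apply functional_extensionality. intro m. rewrite Phi_c. reflexivity.
Qed.

Lemma mul_proof (a b : Q) : Qpred (fun m => ev a (ev b m)).
Proof.
  destruct (comp2 (pre a) (pre b)) as [r hr]. exists r. rewrite hr.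
  apply functional_extensionality. intro m. rewrite !ev_pre. reflexivity.
Qed.

Definition mul (a b : Q) : Q := exist Qpred (fun m => ev a (ev b m)) (mul_proof a b).
Lemma ev_mul a b m : ev (mul a b) m = ev a (ev b m).
Proof. reflexivity. Qed.

Definition pair (m : M) (n : N) : Q := inQ (tMN m n).
Lemma ev_pair m n x : ev (pair m n) x = p (tMNM m n x).
Proof. apply Phi_c. Qed.

Definition rN (n : N) (a : Q) : N := Psi (pre a) n.

Lemma Psi_char n m n' t : q (tNMN (Psi t n) m n') = q (tNMN n (Phi t m) n').
Proof.
  revert t. apply (tensor2_ind K tMN hMN).
  - apply eq_jclosed1.
    + apply (kmorph_comp K (fun t => Psi t n) (fun x => q (tNMN x m n'))).
      apply (kmorph_FS_ev K _ _ Psi n Psi_k).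
      apply (kmorph_comp K (fun x => tNMN x m n') q (s1 m n') hq).
    + apply (kmorph_comp K (fun t => Phi t m) (fun x => q (tNMN n x n'))).
      apply (kmorph_FS_ev K _ _ Phi m Phi_k).
      apply (kmorph_comp K (fun x => tNMN n x n') q (s2 n n') hq).
  - intros u v. rewrite Psi_c, Phi_c. apply (proj1 (pr2 u m n v n')).
Qed.

Lemma rN_char n a m n' : q (tNMN (rN n a) m n') = q (tNMN n (ev a m) n').
Proof. unfold rN. rewrite Psi_char, ev_pre. reflexivity. Qed.

Lemma rN_pair n m n' : rN n (pair m n') = q (tNMN n m n').
Proof.
  apply pr6. intros u v. rewrite rN_char, ev_pair. symmetry. apply (proj1 (pr2 m u n n' v)).
Qed.

Lemma comm_l a m n x : p (tMNM (ev a m) n x) = ev a (p (tMNM m n x)).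
Proof.
  rewrite !ev_pre. generalize (pre a). apply (tensor2_ind K tMN hMN).
  - apply eq_jclosed1.
    + apply (kmorph_comp K (fun t => Phi t m) (fun y => p (tMNM y n x))).
      apply (kmorph_FS_ev K _ _ Phi m Phi_k).
      apply (kmorph_comp K (fun y => tMNM y n x) p (t1 n x) hp).
    + apply (kmorph_FS_ev K _ _ Phi _ Phi_k).
  - intros u v. rewrite !Phi_c.
    exact (eq_trans (proj1 (pr1 u m x v n)) (proj2 (pr1 u m x v n))).
Qed.

Lemma comm_r m n a x : p (tMNM m (rN n a) x) = p (tMNM m n (ev a x)).
Proof.
  unfold rN. rewrite ev_pre. generalize (pre a). apply (tensor2_ind K tMN hMN).
  - apply eq_jclosed1.
    + apply (kmorph_comp K (fun t => Psi t n) (fun y => p (tMNM m y x))).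
      apply (kmorph_FS_ev K _ _ Psi n Psi_k).
      apply (kmorph_comp K (fun y => tMNM m y x) p (t2 m x) hp).
    + apply (kmorph_comp K (fun t => Phi t x) (fun y => p (tMNM m n y))).
      apply (kmorph_FS_ev K _ _ Phi x Phi_k).
      apply (kmorph_comp K (tMNM m n) p (t3 m n) hp).
  - intros u v. rewrite Psi_c, Phi_c. apply (proj2 (pr1 m u x n v)).
Qed.

Lemma inQ_pre a : inQ (pre a) = a.
Proof. apply Q_ext. intro m. rewrite (ev_pre a). reflexivity. Qed.

Lemma mul_kb : kbimorph K mul.
Proof.
  split.
  - intro b. apply kmorph_intoQ. intro m. apply (kmorph_ev_Q (ev b m)).
  - intro a. apply kmorph_intoQ. intro m.
    apply (kmorph_comp K (fun b => ev b m) (ev a) (kmorph_ev_Q m) (ev_kmorph a)).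
Qed.

Lemma mul_assoc a b c : mul a (mul b c) = mul (mul a b) c.
Proof. apply Q_ext. intro; reflexivity. Qed.

Lemma ev_kb : kbimorph K ev.
Proof. split. intro m; apply kmorph_ev_Q. intro a; apply ev_kmorph. Qed.

Lemma lM_sep : l_separated K Q M ev.
Proof.
  intros m n H. apply pr3. intros u v. rewrite <- !ev_pair. apply H.
Qed.

Lemma lM_ess : l_essential K Q M ev.
Proof.
  intro m. destruct (hps m) as [z <-]. revert z.
  apply (tensor3_ind K tMNM hMNM (fun z => ess K (fun w => exists a n, w = ev a n) (p z))).
  - apply (ess_jclosed K hK _ p hp).
  - intros u v x. apply (ess_single K hK). exists (pair u v), x. rewrite ev_pair. reflexivity.
Qed.

Lemma Q_lsep : l_separated K Q Q mul.
Proof.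
  intros m n H. apply Q_ext. intro x. apply pr3. intros u v. rewrite <- !ev_pair.
  exact (f_equal (fun a => ev a x) (H (pair u v))).
Qed.

Lemma Q_rsep : r_separated K Q Q mul.
Proof.
  intros m n H. apply Q_ext. intro x. destruct (hps x) as [z <-]. revert z.
  apply (tensor3_ind K tMNM hMNM).
  - apply eq_jclosed1; apply (kmorph_comp K p (ev _) hp (ev_kmorph _)).
  - intros u v w. rewrite <- ev_pair. exact (f_equal (fun a => ev a w) (H (pair u v))).
Qed.

Lemma Q_ess : forall a : Q, ess K (fun z => exists b c, z = mul b c) a.
Proof.
  assert (H : forall t, ess K (fun z => exists b c, z = mul b c) (inQ t)).
  { apply (tensor2_ind K tMN hMN).
    - apply (ess_jclosed K hK _ inQ inQ_k).
    - intros u v. destruct (hps u) as [z <-]. revert z.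
      apply (tensor3_ind K tMNM hMNM).
      + apply (ess_jclosed K hK _ (fun z => inQ (tMN (p z) v))).
        apply (kmorph_comp K p (fun x => inQ (tMN x v)) hp).
        apply (kmorph_comp K (fun x => tMN x v) inQ (proj1 (proj1 hMN) v) inQ_k).
      + intros u1 v1 u2. apply (ess_single K hK). exists (pair u1 v1), (pair u2 v).
        apply Q_ext. intro m. rewrite ev_mul, !ev_pair.
        change (Phi (tMN (p (tMNM u1 v1 u2)) v) m = p (tMNM u1 v1 (p (tMNM u2 v m)))).
        rewrite Phi_c.
        exact (eq_trans (proj1 (pr1 u1 u2 m v1 v)) (proj2 (pr1 u1 u2 m v1 v))). }
  intro a. rewrite <- inQ_pre. apply H.
Qed.

Lemma rN_kb : kbimorph K rN.
Proof.
  assert (hG : forall i : M * N, kmorph K (fun x => q (tNMN x (fst i) (snd i)))).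
  { intro i. apply (kmorph_comp K (fun x => tNMN x (fst i) (snd i)) q (s1 _ _) hq). }
  assert (sep : forall a b, (forall i : M * N, q (tNMN a (fst i) (snd i)) = q (tNMN b (fst i) (snd i))) -> a = b).
  { intros a b H. apply pr6. intros u v. apply (H (u, v)). }
  split.
  - intro a. apply (kmorph_sep K (M * N) (fun i x => q (tNMN x (fst i) (snd i))) (fun n => rN n a)
                  (fun i n => q (tNMN n (ev a (fst i)) (snd i))) hG sep).
    + intro i. apply (kmorph_comp K (fun x => tNMN x (ev a (fst i)) (snd i)) q (s1 _ _) hq).
    + intros i x. apply rN_char.
  - intro n. apply (kmorph_sep K (M * N) (fun i x => q (tNMN x (fst i) (snd i))) (rN n)
                  (fun i a => q (tNMN n (ev a (fst i)) (snd i))) hG sep).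
    + intro i. apply (kmorph_comp K (fun a => ev a (fst i)) (fun x => q (tNMN n x (snd i))) (kmorph_ev_Q _)).
      apply (kmorph_comp K (fun x => tNMN n x (snd i)) q (s2 _ _) hq).
    + intros i x. apply rN_char.
Qed.

Lemma rN_mod n a b : rN n (mul a b) = rN (rN n a) b.
Proof. apply pr6. intros u v. rewrite !rN_char. reflexivity. Qed.

Lemma rN_sep : r_separated K Q N rN.
Proof. intros n1 n2 H. apply pr6. intros u v. rewrite <- !rN_pair. apply H. Qed.

Lemma rN_ess : r_essential K Q N rN.
Proof.
  intro n. destruct (hqs n) as [z <-]. revert z.
  apply (tensor3_ind K tNMN hNMN (fun z => ess K (fun w => exists n a, w = rN n a) (q z))).
  - apply (ess_jclosed K hK _ q hq).
  - intros v u v'. apply (ess_single K hK). exists v, (pair u v'). rewrite rN_pair. reflexivity.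
Qed.

Lemma pair_kb : kbimorph K pair.
Proof.
  split.
  - intro n. apply kmorph_intoQ. intro x. apply (kmorph_ext K (fun m => p (tMNM m n x))).
    apply (kmorph_comp K (fun m => tMNM m n x) p (t1 n x) hp).
    intro; symmetry; apply ev_pair.
  - intro m. apply kmorph_intoQ. intro x. apply (kmorph_ext K (fun n => p (tMNM m n x))).
    apply (kmorph_comp K (fun n => tMNM m n x) p (t2 m x) hp).
    intro; symmetry; apply ev_pair.
Qed.

Lemma pair_l a m n : pair (ev a m) n = mul a (pair m n).
Proof. apply Q_ext. intro x. rewrite ev_mul, !ev_pair. apply comm_l. Qed.

Lemma pair_r m n a : pair m (rN n a) = mul (pair m n) a.
Proof. apply Q_ext. intro x. rewrite ev_mul, !ev_pair. apply comm_r. Qed.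

Lemma bwd_side : exists (Q : ksl K) (mul : Q -> Q -> Q) (lM : Q -> M -> M) (rN : N -> Q -> N)
    (pair : M -> N -> Q),
  mregular_kquantale K Q mul /\ is_lmodule K Q mul M lM /\ l_mregular K Q M lM /\
  is_rmodule K Q mul N rN /\ r_mregular K Q N rN /\ kbimorph K pair /\
  (forall a m n, pair (lM a m) n = mul a (pair m n)) /\
  (forall m n a, pair m (rN n a) = mul (pair m n) a) /\
  (exists g : TMN -> Q, kmorph K g /\ (forall m n, g (tMN m n) = pair m n) /\ surj g) /\
  (forall m n m', lM (pair m n) m' = p (tMNM m n m')) /\
  (forall a b : Q, (forall m, lM a m = lM b m) -> a = b) /\
  (forall a m n m', p (tMNM (lM a m) n m') = lM a (p (tMNM m n m'))) /\
  (forall n a m n', q (tNMN (rN n a) m n') = q (tNMN n (lM a m) n')) /\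
  (forall n m n', rN n (pair m n') = q (tNMN n m n')).
Proof.
  exists Q, mul, ev, rN, pair.
  assert (hmod : is_lmodule K Q mul Q mul /\ is_rmodule K Q mul Q mul).
  { split; split; try apply mul_kb; intros; [symmetry|]; apply mul_assoc. }
  split; [|split; [|split; [|split; [|split; [|split; [|split; [|split; [|split; [|split; [|split; [|split; [|split]]]]]]]]]]]].
  - split. split. apply mul_kb. apply mul_assoc.
    split. apply hmod. split. apply hmod. split. intros; symmetry; apply mul_assoc.
    split; split.
    + intro a. destruct (Q_ess a) as [S [h1 [h2 h3]]]. exists S. split; auto.
    + apply Q_lsep.
    + intro a. destruct (Q_ess a) as [S [h1 [h2 h3]]]. exists S. split; auto.
    + apply Q_rsep.
  - split. apply ev_kb. intros; reflexivity.
  - split. apply lM_ess. apply lM_sep.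
  - split. apply rN_kb. apply rN_mod.
  - split. apply rN_ess. apply rN_sep.
  - apply pair_kb.
  - apply pair_l.
  - apply pair_r.
  - exists inQ. split. apply inQ_k. split. intros; reflexivity.
    intro a. exists (pre a). apply inQ_pre.
  - apply ev_pair.
  - apply Q_ext.
  - apply comm_l.
  - apply rN_char.
  - apply rN_pair.
Qed.

End Side.

Theorem theorem3 (K : Type) (hK : infinite_regular K) (X Y : ksl K)
  (TXY : ksl K) (tXY : X -> Y -> TXY) (hXY : is_tensor2 K X Y TXY tXY)
  (TYX : ksl K) (tYX : Y -> X -> TYX) (hYX : is_tensor2 K Y X TYX tYX)
  (TXYX : ksl K) (tXYX : X -> Y -> X -> TXYX) (hXYX : is_tensor3 K X Y X TXYX tXYX)
  (TYXY : ksl K) (tYXY : Y -> X -> Y -> TYXY) (hYXY : is_tensor3 K Y X Y TYXY tYXY) :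
  morita_pair K X Y TXY tXY TYX tYX <->
  exists (p : TXYX -> X) (q : TYXY -> Y),
    kmorph K p /\ surj p /\ kmorph K q /\ surj q /\
    (forall (x1 x2 x3 : X) (y1 y2 : Y),
       p (tXYX (p (tXYX x1 y1 x2)) y2 x3) = p (tXYX x1 (q (tYXY y1 x2 y2)) x3) /\
       p (tXYX x1 (q (tYXY y1 x2 y2)) x3) = p (tXYX x1 y1 (p (tXYX x2 y2 x3)))) /\
    (forall (x1 x2 : X) (y1 y2 y3 : Y),
       q (tYXY (q (tYXY y1 x1 y2)) x2 y3) = q (tYXY y1 (p (tXYX x1 y2 x2)) y3) /\
       q (tYXY y1 (p (tXYX x1 y2 x2)) y3) = q (tYXY y1 x1 (q (tYXY y2 x2 y3)))) /\
    (forall x1 x2 : X, (forall (u : X) (v : Y), p (tXYX u v x1) = p (tXYX u v x2)) -> x1 = x2) /\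
    (forall x1 x2 : X, (forall (u : X) (v : Y), p (tXYX x1 v u) = p (tXYX x2 v u)) -> x1 = x2) /\
    (forall y1 y2 : Y, (forall (v : Y) (u : X), q (tYXY v u y1) = q (tYXY v u y2)) -> y1 = y2) /\
    (forall y1 y2 : Y, (forall (u : X) (v : Y), q (tYXY y1 u v) = q (tYXY y2 u v)) -> y1 = y2).
Proof.
  split.
  - intros (A & mulA & B & mulB & lX & rX & lY & rY & pr & br & H).
    destruct H as (hA & hB & hXm & hYm & hpr & hbr & e1 & e2 & e3 & e4 & e5 & e6 & e7 & e8 & (g & hg & hgc & hgs) & (h & hh & hhc & hhs)).
    destruct hXm as [[hlX _] [[hrX rXa] [_ [[lessX lsepX] [_ rsepX]]]]].
    destruct hYm as [[hlY _] [[hrY rYa] [_ [[lessY lsepY] [_ rsepY]]]]].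
    destruct (fwd_side K hK A B X Y TXY TYX TXYX lX rX pr br tXY hXY tYX hYX tXYX hXYX
                hlX hrX hpr hbr e7 lessX lsepX rsepX g hg hgc hgs h hh hhc hhs)
      as [p [hp [hps [pc [pc2 [p3 p4]]]]]].
    destruct (fwd_side K hK B A Y X TYX TXY TYXY lY rY br pr tYX hYX tXY hXY tYXY hYXY
                hlY hrY hbr hpr e8 lessY lsepY rsepY h hh hhc hhs g hg hgc hgs)
      as [q [hq [hqs [qc [qc2 [q5 q6]]]]]].
    exists p, q. split; [exact hp|split; [exact hps|split; [exact hq|split; [exact hqs|split; [|split; [|split; [exact p3|split; [exact p4|split; [exact q5|intros y1 y2 H; apply q6; intros u v; apply H]]]]]]]]].
    + intros x1 x2 x3 y1 y2. rewrite (qc2 y1 x2 y2), !pc, e3, e4, <- rXa. split; reflexivity.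
    + intros x1 x2 y1 y2 y3. rewrite (pc2 x1 y2 x2), !qc, e1, e2, <- rYa. split; reflexivity.
  - intros (p & q & hp & hps & hq & hqs & P1 & P2 & P3 & P4 & P5 & P6).
    destruct (bwd_side K hK X Y TXY TXYX TYXY tXY hXY tXYX hXYX tYXY hYXY p q hp hps hq hqs P1 P2 P3 P6)
      as (A & mulA & lX & rY & pr & hA & hlX & hlXr & hrY & hrYr & hpr & pl & prr & hg & c1 & c2 & c3 & c4 & c5).
    destruct (bwd_side K hK Y X TYX TYXY TXYX tYX hYX tYXY hYXY tXYX hXYX q p hq hqs hp hps
                (fun a1 a2 a3 b1 b2 => P2 b1 b2 a1 a2 a3) (fun x1 x2 y1 y2 y3 => P1 y1 y2 y3 x1 x2)
                P5 (fun a b H => P4 a b (fun u v => H v u)))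
      as (B & mulB & lY & rX & br & hB & hlY & hlYr & hrX & hrXr & hbr & bl & brr & hh & d1 & d2 & d3 & d4 & d5).
    exists A, mulA, B, mulB, lX, rX, lY, rY, pr, br.
    split; [exact hA|]. split; [exact hB|].
    split.
    { split; [exact hlX|]. split; [exact hrX|]. split; [|split; [exact hlXr|exact hrXr]].
      intros a m b. apply P4. intros u v. rewrite d4, !c3, d4. reflexivity. }
    split.
    { split; [exact hlY|]. split; [exact hrY|]. split; [|split; [exact hlYr|exact hrYr]].
      intros b m a. apply P6. intros u v. rewrite c4, !d3, c4. reflexivity. }
    split; [exact hpr|]. split; [exact hbr|]. split; [exact pl|]. split; [exact prr|].
    split; [exact bl|]. split; [exact brr|].
    split. { intros x b y. apply c2. intro x'. rewrite !c1. apply d4. }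
    split. { intros y a x. apply d2. intro y'. rewrite !d1. apply c4. }
    split. { intros x1 y x2. rewrite d5, c1. reflexivity. }
    split. { intros y1 x y2. rewrite c5, d1. reflexivity. }
    split; [exact hg|exact hh].
Qed.
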